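(* Let $X\subset\mathbb{R}$ be a Lebesgue measurable set such that (i) for all $x\in\mathbb{R}$, $x\in X$ if and only if $x+1\in X$; and (ii) for every $k\in\mathbb{Z}$ and every $x\in X$, $kx\in X$. Then either $X$ has Lebesgue measure zero or $\mathbb{R}\setminus X$ has Lebesgue measure zero. *)

(* Defs.v *)
From HB Require Import structures.
From mathcomp Require Import all_boot all_order all_algebra.
From mathcomp Require Import all_classical all_reals all_analysis.
Local Open Scope classical_set_scope.
Local Open Scope ring_scope.

(* Lebesgue measurability on R: membership in the Caratheodory sigma-algebra of
   the Lebesgue outer measure, i.e. the domain of the (completed) Lebesgue
   measure [completed_lebesgue_measure]. *)
Definition lebesgue_measurable {R : realType} (X : set R) : Prop :=
  @measurable _ (caratheodory_type (wlength (R:=R) idfun)^*%mu) X.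

(* Main.v *)
Require Import Defs.
From HB Require Import structures.
From mathcomp Require Import all_boot all_order all_algebra.
From mathcomp Require Import all_classical all_reals all_analysis.
From mathcomp Require Import lra zify.
Import Order.TTheory GRing.Theory Num.Theory.
Local Open Scope classical_set_scope.
Local Open Scope ring_scope.

Section helpers.
Context {R : realType}.
Local Notation mu := ((wlength (R:=R) idfun)^*%mu).
Local Notation wl := (wlength (R:=R) idfun).

Lemma wlE (a b : R) : wl `]a, b] = (Num.max (b - a) 0)%:E.
Proof.
have [ab|ba] := leP a b.
  rewrite wlength_itv_bnd //=; congr EFin.
  by rewrite max_l // subr_ge0.
rewrite max_r; last by rewrite subr_le0 ltW.
rewrite set_itv_ge ?wlength0 //.
by rewrite bnd_simp -leNgt ltW.
Qed.

Lemma mu_itv (a b : R) : mu `]a, b] = (Num.max (b - a) 0)%:E.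
Proof.
rewrite measurable_mu_extE; first exact: wlE.
exact: is_ocitv.
Qed.

Lemma mu_le_cover (E : set R) (M : \bar R) :
  (forall F : nat -> R * R, E `<=` \bigcup_k `](F k).1, (F k).2]%classic ->
     (M <= \sum_(0 <= k <oo) (Num.max ((F k).2 - (F k).1) 0)%:E)%E) ->
  (M <= mu E)%E.
Proof.
move=> H; apply: le_ereal_inf_tmp => _ [A [mA EA] <-].
have /choice[F HF] : forall k, exists x : R * R, `]x.1, x.2]%classic = A k.
  by move=> k; have [x _ <-] := mA k; exists x.
have -> : A = fun k => `](F k).1, (F k).2]%classic.
  by apply/funext => k; rewrite HF.
under eq_eseriesr do rewrite wlE.
apply: H => x /EA [k _ Ax]; exists k => //; by rewrite HF.
Qed.


Lemma mu_scale (c b : R) (A : set R) : 0 < c ->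
  (mu ((fun x => (c * x + b)%R) @` A) <= c%:E * mu A)%E.
Proof.
move=> c0; rewrite -lee_pdivrMl //.
apply: mu_le_cover => F AF.
pose G k := (c * (F k).1 + b, c * (F k).2 + b).
have sub : (fun x => (c * x + b)%R) @` A `<=` \bigcup_k `](G k).1, (G k).2]%classic.
  move=> _ [x /AF [k _ Fx] <-]; exists k => //.
  move: Fx; rewrite /= !in_itv /= => /andP[h1 h2].
  by rewrite ltrD2r lerD2r ltr_pM2l // ler_pM2l // h1 h2.
have H1 : (mu ((fun x => (c * x + b)%R) @` A) <=
    \sum_(0 <= k <oo) mu `](G k).1, (G k).2]%classic)%E.
  exact: le_trans (le_outer_measure mu _ _ sub) (outer_measure_sigma_subadditive mu _).
move: H1; under eq_eseriesr do rewrite mu_itv.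
move=> H1; rewrite lee_pdivrMl //; apply: le_trans H1 _.
rewrite -nneseriesZl; last by move=> i _; rewrite lee_fin le_max lexx orbT.
rewrite le_eqVlt; apply/orP; left; apply/eqP; apply: eq_eseriesr => k _.
rewrite /G /= -EFinM; congr EFin.
rewrite opprD addrACA subrr addr0 -mulrBr.
have [h|h] := leP 0 ((F k).2 - (F k).1).
  by rewrite !max_l // mulr_ge0 // ltW.
rewrite !max_r ?mulr0 //; try exact: ltW.
by rewrite pmulr_rle0 // ltW.
Qed.

Lemma shift_nat {Y : set R} : (forall x : R, Y x <-> Y (x + 1)) ->
  forall (n : nat) x, Y x <-> Y (x + n%:R).
Proof.
move=> h1; elim=> [|n IH] x; first by rewrite addr0.
by rewrite IH h1 -addrA -natr1.
Qed.

Lemma shift_int {Y : set R} : (forall x : R, Y x <-> Y (x + 1)) ->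
  forall (m : int) x, Y x <-> Y (x + m%:~R).
Proof.
move=> h1 [n|n] x; first exact: shift_nat.
rewrite (shift_nat h1 n.+1 (x + (Negz n)%:~R)) NegzE mulrNz -addrA addNr addr0.
by [].
Qed.

Definition zenum (k : nat) : int := if odd k then Negz k./2 else Posz k./2.

Lemma zenum_surj (m : int) : exists k, zenum k = m.
Proof.
case: m => n; [exists n.*2 | exists n.*2.+1]; rewrite /zenum /=.
  by rewrite odd_double doubleK.
by rewrite odd_double /= uphalf_double.
Qed.

Lemma null_periodic (Y : set R) : (forall x : R, Y x <-> Y (x + 1)) ->
  (mu (Y `&` `]0%R, 1%R]) = 0)%E -> (mu Y = 0)%E.
Proof.
move=> h1 Y0.
pose F k := Y `&` `](zenum k)%:~R, (zenum k)%:~R + 1]%classic.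
have F0 k : (mu (F k) = 0)%E.
  apply/eqP; rewrite eq_le outer_measure_ge0 andbT.
  have sub : F k `<=` (fun x => (1 * x + (zenum k)%:~R)%R) @` (Y `&` `]0, 1]%classic).
    move=> x [Yx]; rewrite /= in_itv /= => /andP[h2 h3].
    exists (x - (zenum k)%:~R); last by rewrite mul1r subrK.
    split; first by apply/(shift_int h1 (zenum k)); rewrite subrK.
    by rewrite /= in_itv /= subr_gt0 h2 /= lerBlDl.
  apply: le_trans (le_outer_measure mu _ _ sub) _.
  by apply: le_trans (mu_scale _ _ _ ltr01) _; rewrite Y0 mule0.
have sub : Y `<=` \bigcup_k F k.
  move=> x Yx; have [k zk] := zenum_surj (Num.ceil x - 1).
  exists k => //; split => //; rewrite /= in_itv /= zk.
  have := ceil_itv x; rewrite intrD intrN /= subrK.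
  by move=> /andP[-> ->].
apply/eqP; rewrite eq_le outer_measure_ge0 andbT.
apply: le_trans (le_outer_measure mu _ _ sub) _.
apply: le_trans (outer_measure_sigma_subadditive mu _) _.
by rewrite eseries0 // => i _ _; exact: F0.
Qed.
End helpers.
Section main.
Context {R : realType} (X : set R)
  (h1 : forall x : R, X x <-> X (x + 1))
  (h2 : forall (k : int) (x : R), X x -> X (k%:~R * x)).
Local Notation mu := ((wlength (R:=R) idfun)^*%mu).
Let A := X `&` `]0%R, 1%R]%classic.

Lemma grid (N : nat) (j : int) : (0 < N)%N ->
  (mu (A `&` `](j%:~R / N%:R)%R, ((j + 1)%:~R / N%:R)%R]%classic) <= (N%:R^-1)%:E * mu A)%E.
Proof.
move=> N0; have N0' : (0 < N%:R :> R) by rewrite ltr0n.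
have sub : A `&` `]j%:~R / N%:R, (j + 1)%:~R / N%:R]%classic `<=`
    (fun y => (N%:R^-1 * y + j%:~R / N%:R)%R) @` A.
  move=> x [[Xx _]]; rewrite /= in_itv /= ltr_pdivrMr // ler_pdivlMr // => /andP[l1 l2].
  exists (x * N%:R - j%:~R); last first.
    rewrite mulrBr [N%:R^-1 * _]mulrC mulfK ?gt_eqF // [N%:R^-1 * _]mulrC.
    by rewrite subrK.
  split.
    apply/(shift_int h1 j); rewrite subrK mulrC.
    exact: (h2 (Posz N)).
  rewrite /= in_itv /= subr_gt0 l1 /= lerBlDl. by move: l2; rewrite intrD.
apply: le_trans (le_outer_measure mu _ _ sub) _.
by apply: mu_scale; rewrite invr_gt0.
Qed.

Variables (a : R) (ha : mu A = a%:E) (a0 : 0 <= a).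

Lemma itv_boundN (s t : R) (N : nat) : s < t -> (0 < N)%N ->
  (mu (A `&` `]s, t]%classic) <= (a * (t - s + 2 / N%:R))%:E)%E.
Proof.
move=> st N0; have N0' : (0 < N%:R :> R) by rewrite ltr0n.
set p := Num.ceil (s * N%:R); set q := Num.ceil (t * N%:R).
have pq : p <= q by apply: le_ceil; rewrite ler_pM2r // ltW.
pose M := `|(q - p + 1)%R|%N.
have hM : (M%:R : R) = (q - p + 1)%:~R.
  rewrite /M -[LHS]/((Posz `|(q - p + 1)%R|)%:~R) gez0_abs //. lia.
pose F (i : nat) := A `&` `](((p - 1 + i%:Z)%:~R) / N%:R)%R,
                           (((p - 1 + i%:Z + 1)%:~R) / N%:R)%R]%classic.
have sub : A `&` `]s, t]%classic `<=` \big[setU/set0]_(i < M) F i.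
  move=> x [Ax]; rewrite /= in_itv /= => /andP[sx xt].
  rewrite -bigcup_mkord.
  set c := Num.ceil (x * N%:R).
  have pc : p <= c by apply: le_ceil; rewrite ler_pM2r // ltW.
  have cq : c <= q by apply: le_ceil; rewrite ler_pM2r.
  exists `|(c - p)%R|%N; first by rewrite /=; lia.
  split => //.
  have -> : (p - 1 + (`|(c - p)%R|%N)%:Z) = c - 1 by rewrite gez0_abs; lia.
  rewrite subrK /= in_itv /= ltr_pdivrMr // ler_pdivlMr //.
  exact: ceil_itv.
apply: le_trans (le_outer_measure mu _ _ sub) _.
apply: le_trans (outer_measure_subadditive mu F M) _.
apply: (@le_trans _ _ (\sum_(i < M) ((N%:R^-1 * a)%:E))%R).
  apply: lee_sum => i _.
  rewrite EFinM -ha /F.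
  by have := grid N (p - 1 + (nat_of_ord i)%:Z) N0; rewrite intrD.
rewrite sumEFin sumr_const card_ord lee_fin -[_ *+ M]mulr_natr hM.
rewrite [N%:R^-1 * a]mulrC -mulrA ler_wpM2l //.
rewrite mulrC ler_pdivrMr // mulrDl mulrBl mulfVK ?gt_eqF //.
have := ceil_itv (t * N%:R); have := ceil_ge (s * N%:R).
rewrite -/p -/q !intrD /=; lra.
Qed.

Lemma itv_bound (s t : R) :
  (mu (A `&` `]s, t]%classic) <= (a * Num.max (t - s) 0)%:E)%E.
Proof.
have [ts|st] := leP t s.
  rewrite set_itv_ge; last by rewrite bnd_simp -leNgt.
  rewrite setI0 outer_measure0 lee_fin mulr_ge0 // le_max lexx orbT.
  by [].
rewrite max_l; last by rewrite subr_ge0 ltW.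
apply/lee_addgt0Pr => e e0.
pose N := (Num.trunc (2 * a / e)).+1.
have N0 : (0 < N)%N by [].
have N0' : (0 < N%:R :> R) by rewrite ltr0n.
apply: le_trans (itv_boundN _ _ _ st N0) _.
rewrite -EFinD lee_fin mulrDr lerD2l mulrA ltW //.
rewrite ltr_pdivrMr // -ltr_pdivrMl //.
rewrite mulrC [a * 2]mulrC; exact: truncnS_gt.
Qed.

Lemma key (E : set R) : 0 < a -> (mu (A `&` E) <= a%:E * mu E)%E.
Proof.
move=> apos; rewrite -lee_pdivrMl //.
apply: mu_le_cover => F EF.
rewrite lee_pdivrMl //.
have sub : A `&` E `<=` \bigcup_k (A `&` `](F k).1, (F k).2]%classic).
  move=> x [Ax /EF [k _ Fx]]; by exists k.
apply: le_trans (le_outer_measure mu _ _ sub) _.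
apply: le_trans (outer_measure_sigma_subadditive mu _) _.
rewrite -nneseriesZl; last by move=> i _; rewrite lee_fin le_max lexx orbT.
apply: lee_nneseries => [i _ _|n _]; first exact: outer_measure_ge0.
by rewrite -EFinM; exact: itv_bound.
Qed.

End main.

Local Notation mu := ((wlength (R:=_) idfun)^*%mu).

Theorem lemma2 (R : realType) (X : set R)
  (mX : lebesgue_measurable X)
  (h1 : forall x : R, X x <-> X (x + 1))
  (h2 : forall (k : int) (x : R), X x -> X (k%:~R * x)) :
  (completed_lebesgue_measure X = 0%E) \/
  (completed_lebesgue_measure (~` X) = 0%E).
Proof.
change ((mu X = 0)%E \/ (mu (~` X) = 0)%E).
have mA1 : (mu (X `&` `]0%R, 1%R]%classic) <= mu `]0%R, 1%R]%classic)%E.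
  exact: (le_outer_measure mu _ _ (@subIsetr _ X _)).
rewrite mu_itv subr0 max_l // in mA1.
have mA0 : (0 <= mu (X `&` `]0%R, 1%R]%classic))%E by exact: outer_measure_ge0.
set r := fine (mu (X `&` `]0%R, 1%R]%classic)).
have hr : mu (X `&` `]0%R, 1%R]%classic) = r%:E.
  by rewrite /r fineK // ge0_fin_numE // (le_lt_trans mA1) // ltry.
have r0 : 0 <= r by rewrite -lee_fin -hr.
have r1 : r <= 1 by rewrite -lee_fin -hr.
have [rz|rpos] := eqVneq r 0.
  left; apply: null_periodic => //.
  by rewrite hr rz.
have rp : 0 < r by rewrite lt_def rpos r0.
have := key X h1 h2 _ hr r0 (X `&` `]0%R, 1%R]%classic) rp.
rewrite setIid hr -EFinM lee_fin => rr.
have r1' : r = 1.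
  apply/eqP; rewrite eq_le r1 /=.
  by rewrite -(ler_pM2l rp) mulr1.
right; apply: null_periodic.
  move=> x; split => Hx H; apply: Hx; [exact: (proj2 (h1 x) H) | exact: (proj1 (h1 x) H)].
have := mX `]0%R, 1%R]%classic.
rewrite /= mu_itv subr0 max_l // setIC hr r1' => /eqP.
move/eqP => H; rewrite setIC.
apply/eqP; rewrite eq_le outer_measure_ge0 andbT.
move: (lexx (1%E : \bar R)); rewrite [X in (X <= _)%E]H.
move=> H2.
have H3 : (1 + (wlength (R:=R) idfun)^*%mu (`]0%R,1%R] `&` ~` X) <= 1 + 0)%E.
  by rewrite adde0; exact: H2.
by rewrite leeD2lE // in H3.
Qed.
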